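(* Let $c>0$ and let $F:\mathbb{S}^3(c/4)\to T^1\mathbb{S}^2(c)$ be the map defined in the context. Then $F$ is a covering map with $F(-y)=F(y)$, and: (1) For $m=\log_2 c$ and any $r\ge 0$, $F$ induces an isometry from the real projective space $\mathbb{R}\mathrm{P}^3(c/4)=\mathbb{S}^3(c/4)/\{\pm 1\}$, with the metric of constant curvature $c/4$ induced from $\mathbb{S}^3(c/4)$, onto $T^1\mathbb{S}^2(c)$ equipped with the Riemannian metric obtained by restricting the generalized Cheeger–Gromoll metric $h_{m,r}$ of $T\mathbb{S}^2(c)$. Equivalently, $F^*(h_{m,r}|_{T^1\mathbb{S}^2(c)})$ is the round metric of $\mathbb{S}^3(c/4)$. (2) Take $c=4$, so that $\mathbb{S}^3(c/4)=\mathbb{S}^3$ and $F:\mathbb{S}^3\to T^1\mathbb{S}^2(4)$. Let $\epsilon>0$ and let $g_\epsilon$ be the Berger metric on $\mathbb{S}^3$, i.e. the Riemannian metric for which $\{X_1,X_2,\epsilon X_3\}$ is an orthonormal frame. Then for $m=\log_2(\epsilon^2)+2$ and any $r\ge0$, $F$ induces an isometry from $(\mathbb{R}\mathrm{P}^3,g_\epsilon)$ (the quotient of $(\mathbb{S}^3,g_\epsilon)$ by $\pm1$) onto $(T^1\mathbb{S}^2(4),h_{m,r}|_{T^1\mathbb{S}^2(4)})$.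
   Context: For $c>0$, $\mathbb{S}^n(c)=\{x\in\mathbb{R}^{n+1}:|x|=1/\sqrt c\}$ with the metric induced from Euclidean $\mathbb{R}^{n+1}$ (constant curvature $c$); $\mathbb{S}^n=\mathbb{S}^n(1)$. For $x=(x^1,x^2,x^3,x^4)\in\mathbb{R}^4$ write $z_1=x^1+\sqrt{-1}x^2$, $z_2=x^3+\sqrt{-1}x^4$. On $\mathbb{S}^3$ define the orthonormal vector fields - $X_1(x)=(-x^4,-x^3,x^2,x^1)$, - $X_2(x)=(-x^3,x^4,x^1,-x^2)$, - $X_3(x)=(-x^2,x^1,-x^4,x^3)$. For $x\in\mathbb{S}^3$ let $A_x=\begin{pmatrix}z_1&-\bar z_2\\ z_2&\bar z_1\end{pmatrix}\in\mathrm{SU}(2)$. Let $e_1=\begin{pmatrix}0&\sqrt{-1}\\ \sqrt{-1}&0\end{pmatrix}$, $e_2=\begin{pmatrix}0&-1\\1&0\end{pmatrix}$, $e_3=\begin{pmatrix}\sqrt{-1}&0\\0&-\sqrt{-1}\end{pmatrix}$. These form an orthonormal basis of $\mathfrak{su}(2)$ for $\langle X,Y\rangle=-\tfrac12\mathrm{Tr}(XY)$. Identify $\mathfrak{su}(2)$ with $\mathbb{R}^3$ via coordinates in this basis. Then $\rho(A_x)\in\mathrm{SO}(3)$ is the matrix of $Y\mapsto A_xYA_x^{-1}$, whose columns are the coordinate vectors of $A_xe_jA_x^{-1}$: - $A_xe_1A_x^{-1}=(\mathrm{Re}(z_1^2-\bar z_2^2),\ \mathrm{Im}(z_1^2-\bar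 z_2^2),\ -2\mathrm{Re}(z_1z_2))$, - $A_xe_2A_x^{-1}=(\mathrm{Im}(\bar z_1^2+z_2^2),\ \mathrm{Re}(\bar z_1^2+z_2^2),\ 2\mathrm{Im}(z_1z_2))$, - $A_xe_3A_x^{-1}=(2\mathrm{Re}(z_1\bar z_2),\ 2\mathrm{Im}(z_1\bar z_2),\ |z_1|^2-|z_2|^2)$. The unit tangent bundle is $T^1\mathbb{S}^2(c)=\{(p,v)\in\mathbb{R}^3\times\mathbb{R}^3: |p|=1/\sqrt c,\ |v|=1,\ \langle p,v\rangle=0\}$, with projection $\pi(p,v)=p$. The map $F:\mathbb{S}^3(c/4)\to T^1\mathbb{S}^2(c)$ is $$F(2x/\sqrt c)=\big(\tfrac1{\sqrt c}A_xe_3A_x^{-1},\ A_xe_1A_x^{-1}\big),\qquad x\in\mathbb{S}^3,$$ i.e. $F=\phi\circ\rho\circ\psi\circ\iota$ with $\iota(2x/\sqrt c)=x$, $\psi(x)=A_x$, and $\phi(c_1\,c_2\,c_3)=(c_3/\sqrt c,c_1)$. Lifts: $T\mathbb{S}^2(c)\subset\mathbb{R}^3\times\mathbb{R}^3$. For $(p,e)\in T\mathbb{S}^2(c)$ and $X\in T_p\mathbb{S}^2(c)$: - the vertical lift $X^v\in T_{(p,e)}T\mathbb{S}^2(c)$ is the velocity at $t=0$ of $t\mapsto(p,e+tX)$; - the horizontal lift $X^h$ is the velocity at $t=0$ of $t\mapsto(\gamma(t),V(t))$, where $\gamma$ is a curve in $\mathbb{S}^2(c)$ with $\gamma(0)=p$,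 $\dot\gamma(0)=X$, and $V$ is the Levi-Civita parallel field along $\gamma$ with $V(0)=e$. Every tangent vector of $T\mathbb{S}^2(c)$ at $(p,e)$ is uniquely $X^h+Y^v$, and $T_{(p,e)}T^1\mathbb{S}^2(c)=\{X^h+Y^v:\langle Y,e\rangle=0\}$. Generalized Cheeger–Gromoll metric: for $m\in\mathbb{R}$ and $r\ge0$, $h_{m,r}$ on $T\mathbb{S}^2(c)$ is given at $(p,e)$ by - $h_{m,r}(X^h,Y^h)=\langle X,Y\rangle$, - $h_{m,r}(X^h,Y^v)=0$, - $h_{m,r}(X^v,Y^v)=\omega^m(\langle X,Y\rangle+r\langle X,e\rangle\langle Y,e\rangle)$, where $\omega=1/(1+|e|^2)$. *)

(* Defs.v *)
From Stdlib Require Import Reals.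
Open Scope R_scope.

Definition R3 : Type := (R * R * R)%type.
Definition R4 : Type := (R * R * R * R)%type.

Definition dot3 (u v : R3) : R :=
  let '(a1, a2, a3) := u in let '(b1, b2, b3) := v in a1*b1 + a2*b2 + a3*b3.
Definition add3 (u v : R3) : R3 :=
  let '(a1, a2, a3) := u in let '(b1, b2, b3) := v in (a1+b1, a2+b2, a3+b3).
Definition scal3 (k : R) (u : R3) : R3 :=
  let '(a1, a2, a3) := u in (k*a1, k*a2, k*a3).
Definition norm3 (u : R3) : R := sqrt (dot3 u u).
Definition c1 (u : R3) : R := let '(a, _, _) := u in a.
Definition c2 (u : R3) : R := let '(_, a, _) := u in a.
Definition c3 (u : R3) : R := let '(_, _, a) := u in a.

Definition dot4 (u v : R4) : R :=
  let '(a1, a2, a3, a4) := u in let '(b1, b2, b3, b4) := v in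
  a1*b1 + a2*b2 + a3*b3 + a4*b4.
Definition add4 (u v : R4) : R4 :=
  let '(a1, a2, a3, a4) := u in let '(b1, b2, b3, b4) := v in
  (a1+b1, a2+b2, a3+b3, a4+b4).
Definition scal4 (k : R) (u : R4) : R4 :=
  let '(a1, a2, a3, a4) := u in (k*a1, k*a2, k*a3, k*a4).
Definition opp4 (u : R4) : R4 := scal4 (-1) u.
Definition norm4 (u : R4) : R := sqrt (dot4 u u).

Definition on_S3 (k : R) (y : R4) : Prop := norm4 y = 1 / sqrt k.

(* unit tangent bundle T^1 S^2(c) inside R^3 x R^3 *)
Definition in_T1S2 (c : R) (q : R3 * R3) : Prop :=
  let (p, v) := q in norm3 p = 1 / sqrt c /\ norm3 v = 1 /\ dot3 p v = 0.

(* coordinates of A_x e_1 A_x^{-1} and A_x e_3 A_x^{-1} (Re/Im expanded,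
   z1 = x1 + i x2, z2 = x3 + i x4) *)
Definition col1 (x : R4) : R3 :=
  let '(x1, x2, x3, x4) := x in
  (x1^2 - x2^2 - x3^2 + x4^2, 2*x1*x2 + 2*x3*x4, - (2*(x1*x3 - x2*x4))).
Definition col3 (x : R4) : R3 :=
  let '(x1, x2, x3, x4) := x in
  (2*(x1*x3 + x2*x4), 2*(x2*x3 - x1*x4), x1^2 + x2^2 - x3^2 - x4^2).

(* F(2x/sqrt c) = (A_x e3 A_x^{-1} / sqrt c, A_x e1 A_x^{-1}), i.e. x = (sqrt c/2) y.
   The formula is polynomial, hence extended to all of R^4. *)
Definition Fmap (c : R) (y : R4) : R3 * R3 :=
  let x := scal4 (sqrt c / 2) y in (scal3 (1 / sqrt c) (col3 x), col1 x).

Definition vderiv3 (f : R -> R3) (t : R) (v : R3) : Prop :=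
  derivable_pt_lim (fun s => c1 (f s)) t (c1 v) /\
  derivable_pt_lim (fun s => c2 (f s)) t (c2 v) /\
  derivable_pt_lim (fun s => c3 (f s)) t (c3 v).

(* differential dF_y(w) (in R^3 x R^3), via the polynomial extension of F *)
Definition is_dF (c : R) (y w : R4) (xi : R3 * R3) : Prop :=
  vderiv3 (fun t => fst (Fmap c (add4 y (scal4 t w)))) 0 (fst xi) /\
  vderiv3 (fun t => snd (Fmap c (add4 y (scal4 t w)))) 0 (snd xi).

Definition tang (c : R) (q v : R3) : R3 := add3 v (scal3 (- (c * dot3 v q)) q).

(* horizontal lift X^h at (p,e): velocity at 0 of (gamma, V), gamma a smooth
   curve in S^2(c) with gamma(0)=p, gamma'(0)=X, V a tangent field along gamma,
   Levi-Civita parallel (tangential part of V' vanishes), V(0)=e. *)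
Definition is_hlift (c : R) (p e X : R3) (H : R3 * R3) : Prop :=
  exists (gam V : R -> R3) (V0' : R3),
    (forall t, norm3 (gam t) = 1 / sqrt c) /\
    (forall t, exists u, vderiv3 gam t u) /\
    (forall t, dot3 (V t) (gam t) = 0) /\
    gam 0 = p /\ V 0 = e /\ vderiv3 gam 0 X /\
    (forall t, exists v, vderiv3 V t v /\ tang c (gam t) v = (0, 0, 0)) /\
    vderiv3 V 0 V0' /\ H = (X, V0').

(* h_{m,r}((p,e))(xi1, xi2) = val, with xi_i = X_i^h + Y_i^v *)
Definition cg_metric (c m r : R) (pe : R3 * R3) (xi1 xi2 : R3 * R3) (val : R) : Prop :=
  let (p, e) := pe in
  exists (X1 Y1 X2 Y2 : R3) (H1 H2 : R3 * R3),
    dot3 X1 p = 0 /\ dot3 Y1 p = 0 /\ dot3 X2 p = 0 /\ dot3 Y2 p = 0 /\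
    is_hlift c p e X1 H1 /\ is_hlift c p e X2 H2 /\
    xi1 = (fst H1, add3 (snd H1) Y1) /\ xi2 = (fst H2, add3 (snd H2) Y2) /\
    val = dot3 X1 X2 + Rpower (1 / (1 + dot3 e e)) m *
                       (dot3 Y1 Y2 + r * dot3 Y1 e * dot3 Y2 e).

(* F^*(h_{m,r}|T^1S^2(c)) = g on S^3(c/4) *)
Definition pullback_is (c m r : R) (g : R4 -> R4 -> R4 -> R) : Prop :=
  forall y w1 w2 : R4,
    on_S3 (c / 4) y -> dot4 w1 y = 0 -> dot4 w2 y = 0 ->
    exists xi1 xi2 : R3 * R3,
      is_dF c y w1 xi1 /\ is_dF c y w2 xi2 /\
      cg_metric c m r (Fmap c y) xi1 xi2 (g y w1 w2) /\
      (forall v, cg_metric c m r (Fmap c y) xi1 xi2 v -> v = g y w1 w2).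

Definition round_metric (y w1 w2 : R4) : R := dot4 w1 w2.

Definition Xf1 (x : R4) : R4 := let '(x1, x2, x3, x4) := x in (-x4, -x3, x2, x1).
Definition Xf2 (x : R4) : R4 := let '(x1, x2, x3, x4) := x in (-x3, x4, x1, -x2).
Definition Xf3 (x : R4) : R4 := let '(x1, x2, x3, x4) := x in (-x2, x1, -x4, x3).

(* Berger metric: {X1, X2, eps X3} orthonormal. *)
Definition berger (eps : R) (x w1 w2 : R4) : R :=
  dot4 w1 (Xf1 x) * dot4 w2 (Xf1 x) + dot4 w1 (Xf2 x) * dot4 w2 (Xf2 x)
  + dot4 w1 (Xf3 x) * dot4 w2 (Xf3 x) / eps^2.

Definition log2 (x : R) : R := ln x / ln 2.

(* Main.v *)
Require Import Defs.
From Stdlib Require Import Reals Lra Psatz FunctionalExtensionality.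
Require Import Defs.
Open Scope R_scope.

Lemma dlim_ext f g x l : (forall t, f t = g t) -> derivable_pt_lim g x l -> derivable_pt_lim f x l.
Proof. intros H; replace f with g; auto. apply functional_extensionality; intros; auto. Qed.

Lemma dlim_eq f x l l' : l = l' -> derivable_pt_lim f x l -> derivable_pt_lim f x l'.
Proof. intros ->; auto. Qed.

Lemma rat_deriv a b d k t0 : 0 <= k ->
  derivable_pt_lim (fun t => (a + b*t + d*t^2)/(1+k*t^2)) t0
   (((b + 2*d*t0)*(1+k*t0^2) - (a+b*t0+d*t0^2)*(2*k*t0))/(1+k*t0^2)^2).
Proof.
  intros Hk.
  assert (Hpos : 0 < 1 + k*t0^2) by nra.
  assert (Hp : derivable_pt_lim (fun t => a + b*t + d*t^2) t0 (b + 2*d*t0)).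
  { apply (dlim_eq _ _ (0 + b*1 + d*(INR 2 * t0^1))).
    simpl; ring.
    apply (derivable_pt_lim_plus (fun t => a + b*t) (fun t => d * t^2)).
    apply (derivable_pt_lim_plus (fct_cte a) (fun t => b*t)).
    apply derivable_pt_lim_const.
    apply (derivable_pt_lim_scal id). apply derivable_pt_lim_id.
    apply (derivable_pt_lim_scal (fun t => t^2)). apply derivable_pt_lim_pow. }
  assert (Hq : derivable_pt_lim (fun t => 1 + k*t^2) t0 (2*k*t0)).
  { apply (dlim_eq _ _ (0 + k*(INR 2 * t0^1))). simpl; ring.
    apply (derivable_pt_lim_plus (fct_cte 1) (fun t => k * t^2)).
    apply derivable_pt_lim_const.
    apply (derivable_pt_lim_scal (fun t => t^2)). apply derivable_pt_lim_pow. }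
  eapply dlim_eq; [| apply (derivable_pt_lim_div _ _ _ _ _ Hp Hq)].
  unfold Rsqr; simpl; field; lra. simpl; lra.
Qed.

Lemma quad_deriv f a b d : (forall t, f t = a + b*t + d*t^2) -> derivable_pt_lim f 0 b.
Proof.
  intros H. apply (dlim_ext _ (fun t => (a + b*t + d*t^2)/(1+0*t^2))).
  intros t; rewrite H; field; lra.
  eapply dlim_eq; [| apply rat_deriv; lra]. field.
Qed.

Lemma dot3_comm u v : dot3 u v = dot3 v u.
Proof. destruct u as [[? ?] ?], v as [[? ?] ?]; simpl; ring. Qed.
Lemma dot3_add_l u v w : dot3 (add3 u v) w = dot3 u w + dot3 v w.
Proof. destruct u as [[? ?] ?], v as [[? ?] ?], w as [[? ?] ?]; simpl; ring. Qed.
Lemma dot3_add_r u v w : dot3 w (add3 u v) = dot3 w u + dot3 w v.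
Proof. destruct u as [[? ?] ?], v as [[? ?] ?], w as [[? ?] ?]; simpl; ring. Qed.
Lemma dot3_scal_l a u v : dot3 (scal3 a u) v = a * dot3 u v.
Proof. destruct u as [[? ?] ?], v as [[? ?] ?]; simpl; ring. Qed.
Lemma dot3_scal_r a u v : dot3 v (scal3 a u) = a * dot3 v u.
Proof. destruct u as [[? ?] ?], v as [[? ?] ?]; simpl; ring. Qed.
Ltac dexp := repeat (rewrite ?dot3_add_l, ?dot3_add_r, ?dot3_scal_l, ?dot3_scal_r).

Definition ratf (a b d k t : R) := (a + b*t + d*t^2)/(1+k*t^2).

Definition gamf (c : R) (p X : R3) (t : R) : R3 :=
  let k := c * dot3 X X / 4 in
  let '(p1,p2,p3) := p in let '(X1,X2,X3) := X in
  (ratf p1 X1 (-(k*p1)) k t, ratf p2 X2 (-(k*p2)) k t, ratf p3 X3 (-(k*p3)) k t).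

Definition Vf (c : R) (p X e : R3) (t : R) : R3 :=
  let k := c * dot3 X X / 4 in let l := c * dot3 e X in
  let '(p1,p2,p3) := p in let '(X1,X2,X3) := X in let '(e1,e2,e3) := e in
  (ratf e1 (-(l*p1)) (e1*k - l*X1/2) k t,
   ratf e2 (-(l*p2)) (e2*k - l*X2/2) k t,
   ratf e3 (-(l*p3)) (e3*k - l*X3/2) k t).

Lemma k_nonneg c X : 0 < c -> 0 <= c * dot3 X X / 4.
Proof. intros; destruct X as [[x1 x2] x3]; simpl. assert (0 <= x1*x1+x2*x2+x3*x3) by nra. nra. Qed.

Lemma gam_vec c p X t : 0 < c -> gamf c p X t =
  scal3 (/(1 + c*dot3 X X/4*t^2)) (add3 (scal3 (1 - c*dot3 X X/4*t^2) p) (scal3 t X)).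
Proof.
  intros Hc. pose proof (k_nonneg c X Hc). assert (0 < 1 + c*dot3 X X/4*t^2) by nra.
  revert H0. unfold gamf, ratf.
  destruct p as [[p1 p2] p3], X as [[x1 x2] x3]; simpl; intros.
  f_equal; [f_equal|]; field; lra.
Qed.

Lemma V_vec c p X e t : 0 < c -> Vf c p X e t =
  scal3 (/(1 + c*dot3 X X/4*t^2)) (add3 (add3 (scal3 (1 + c*dot3 X X/4*t^2) e)
     (scal3 (-(c*dot3 e X)*t) p)) (scal3 (-(c*dot3 e X)*t^2/2) X)).
Proof.
  intros Hc. pose proof (k_nonneg c X Hc). assert (0 < 1 + c*dot3 X X/4*t^2) by nra.
  revert H0. unfold Vf, ratf.
  destruct p as [[p1 p2] p3], X as [[x1 x2] x3], e as [[e1 e2] e3]; simpl; intros.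
  f_equal; [f_equal|]; field; lra.
Qed.

Lemma gam_norm c p X t : 0 < c -> dot3 p p = 1/c -> dot3 X p = 0 ->
  dot3 (gamf c p X t) (gamf c p X t) = 1/c.
Proof.
  intros Hc Hp HX. pose proof (k_nonneg c X Hc). assert (0 < 1 + c*dot3 X X/4*t^2) by nra.
  rewrite gam_vec by auto. dexp. rewrite (dot3_comm p X), Hp, HX.
  field. lra.
Qed.

Lemma V_gam c p X e t : 0 < c -> dot3 p p = 1/c -> dot3 X p = 0 -> dot3 e p = 0 ->
  dot3 (Vf c p X e t) (gamf c p X t) = 0.
Proof.
  intros Hc Hp HX He. pose proof (k_nonneg c X Hc). assert (0 < 1 + c*dot3 X X/4*t^2) by nra.
  rewrite gam_vec, V_vec by auto. dexp. rewrite (dot3_comm p X), Hp, HX, He.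
  field. lra.
Qed.

Definition ratd a b d k t0 := ((b + 2*d*t0)*(1+k*t0^2) - (a+b*t0+d*t0^2)*(2*k*t0))/(1+k*t0^2)^2.

Lemma vderiv3_rat (f : R -> R3) a1 b1 d1 a2 b2 d2 a3 b3 d3 k t0 : 0 <= k ->
  (forall t, f t = (ratf a1 b1 d1 k t, ratf a2 b2 d2 k t, ratf a3 b3 d3 k t)) ->
  vderiv3 f t0 (ratd a1 b1 d1 k t0, ratd a2 b2 d2 k t0, ratd a3 b3 d3 k t0).
Proof.
  intros Hk H. unfold vderiv3; simpl.
  split; [|split]; eapply dlim_ext; try (intro t; rewrite H; simpl; reflexivity);
  apply rat_deriv; auto.
Qed.

Lemma gam_comp c p X t : gamf c p X t =
  (ratf (c1 p) (c1 X) (-(c*dot3 X X/4 * c1 p)) (c*dot3 X X/4) t,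
   ratf (c2 p) (c2 X) (-(c*dot3 X X/4 * c2 p)) (c*dot3 X X/4) t,
   ratf (c3 p) (c3 X) (-(c*dot3 X X/4 * c3 p)) (c*dot3 X X/4) t).
Proof. destruct p as [[? ?] ?], X as [[? ?] ?]; reflexivity. Qed.

Lemma V_comp c p X e t : Vf c p X e t =
  (ratf (c1 e) (-(c*dot3 e X*c1 p)) (c1 e*(c*dot3 X X/4) - c*dot3 e X*c1 X/2) (c*dot3 X X/4) t,
   ratf (c2 e) (-(c*dot3 e X*c2 p)) (c2 e*(c*dot3 X X/4) - c*dot3 e X*c2 X/2) (c*dot3 X X/4) t,
   ratf (c3 e) (-(c*dot3 e X*c3 p)) (c3 e*(c*dot3 X X/4) - c*dot3 e X*c3 X/2) (c*dot3 X X/4) t).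
Proof. destruct p as [[? ?] ?], X as [[? ?] ?], e as [[? ?] ?]; reflexivity. Qed.

Lemma ratd_V ei l pi Xi k t : 0 <= k ->
  ratd ei (-(l*pi)) (ei*k - l*Xi/2) k t = (-l/(1+k*t^2)) * ratf pi Xi (-(k*pi)) k t.
Proof. intros; unfold ratd, ratf. assert (0 < 1 + k*t^2) by nra. field. lra. Qed.

Lemma ratd0 a b d k : ratd a b d k 0 = b.
Proof. unfold ratd. field. Qed.

Lemma hlift_ex c p e X : 0 < c -> dot3 p p = 1/c -> dot3 X p = 0 -> dot3 e p = 0 ->
  is_hlift c p e X (X, scal3 (-(c*dot3 e X)) p).
Proof.
  intros Hc Hp HX He. pose proof (k_nonneg c X Hc) as Hk.
  exists (gamf c p X), (Vf c p X e), (scal3 (-(c*dot3 e X)) p).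
  split; [|split; [|split; [|split; [|split; [|split; [|split; [|split]]]]]]].
  - intros t. unfold norm3. rewrite gam_norm by auto. unfold Rdiv; rewrite !Rmult_1_l. apply sqrt_inv.
  - intros t. eexists. eapply vderiv3_rat; [exact Hk| intro; apply gam_comp].
  - intros t. apply V_gam; auto.
  - rewrite gam_comp. destruct p as [[? ?] ?]; unfold ratf; simpl; f_equal; [f_equal|]; field.
  - rewrite V_comp. destruct e as [[? ?] ?]; unfold ratf; simpl; f_equal; [f_equal|]; field.
  - pose proof (vderiv3_rat (gamf c p X) _ _ _ _ _ _ _ _ _ _ 0 Hk (gam_comp c p X)) as H.
    rewrite !ratd0 in H. destruct X as [[? ?] ?]; exact H.
  - intros t. eexists; split. eapply vderiv3_rat; [exact Hk| intro; apply V_comp].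
    rewrite !ratd_V by auto.
    set (g := gamf c p X t). set (lam := -(c*dot3 e X)/(1+c*dot3 X X/4*t^2)).
    assert (Hg : dot3 g g = 1/c) by (apply gam_norm; auto).
    replace (lam * ratf (c1 p) (c1 X) (- (c * dot3 X X / 4 * c1 p)) (c * dot3 X X / 4) t,
     lam * ratf (c2 p) (c2 X) (- (c * dot3 X X / 4 * c2 p)) (c * dot3 X X / 4) t,
     lam * ratf (c3 p) (c3 X) (- (c * dot3 X X / 4 * c3 p)) (c * dot3 X X / 4) t)
     with (scal3 lam g) by (unfold g; rewrite gam_comp; reflexivity).
    unfold tang. rewrite dot3_scal_l, Hg.
    destruct g as [[g1 g2] g3]; simpl. f_equal; [f_equal|]; field; lra.
  - pose proof (vderiv3_rat (Vf c p X e) _ _ _ _ _ _ _ _ _ _ 0 Hk (V_comp c p X e)) as H.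
    rewrite !ratd0 in H. destruct p as [[? ?] ?]; simpl in *.
    replace (-(c*dot3 e X)*r) with (-(c*dot3 e X*r)) by ring.
    replace (-(c*dot3 e X)*r0) with (-(c*dot3 e X*r0)) by ring.
    replace (-(c*dot3 e X)*r1) with (-(c*dot3 e X*r1)) by ring. exact H.
  - reflexivity.
Qed.

Lemma dot3_c (u v : R3) : dot3 u v = c1 u * c1 v + c2 u * c2 v + c3 u * c3 v.
Proof. destruct u as [[? ?] ?], v as [[? ?] ?]; reflexivity. Qed.

Lemma vderiv3_dot f g t u v : vderiv3 f t u -> vderiv3 g t v ->
  derivable_pt_lim (fun s => dot3 (f s) (g s)) t (dot3 u (g t) + dot3 (f t) v).
Proof.
  intros [F1 [F2 F3]] [G1 [G2 G3]].
  eapply dlim_ext. intro s; apply dot3_c.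
  rewrite !dot3_c.
  eapply dlim_eq; [| apply (derivable_pt_lim_plus (fun s => c1 (f s) * c1 (g s) + c2 (f s) * c2 (g s)) (fun s => c3 (f s) * c3 (g s)))].
  2: apply (derivable_pt_lim_plus (fun s => c1 (f s) * c1 (g s)) (fun s => c2 (f s) * c2 (g s))).
  2: apply (derivable_pt_lim_mult (fun s => c1 (f s)) (fun s => c1 (g s))); eauto.
  2: apply (derivable_pt_lim_mult (fun s => c2 (f s)) (fun s => c2 (g s))); eauto.
  2: apply (derivable_pt_lim_mult (fun s => c3 (f s)) (fun s => c3 (g s))); eauto.
  ring.
Qed.

Lemma vderiv3_unique f t u v : vderiv3 f t u -> vderiv3 f t v -> u = v.
Proof.
  intros [F1 [F2 F3]] [G1 [G2 G3]].
  pose proof (uniqueness_limite _ _ _ _ F1 G1).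
  pose proof (uniqueness_limite _ _ _ _ F2 G2).
  pose proof (uniqueness_limite _ _ _ _ F3 G3).
  destruct u as [[? ?] ?], v as [[? ?] ?]; simpl in *; subst; reflexivity.
Qed.

Lemma hlift_unique c p e X H : is_hlift c p e X H -> H = (X, scal3 (-(c*dot3 e X)) p).
Proof.
  intros (gam & V & V0' & Hn & Hd & Hperp & Hg0 & HV0 & HX & Hpar & HV0' & ->).
  destruct (Hpar 0) as (v & Hv & Ht).
  pose proof (vderiv3_unique _ _ _ _ Hv HV0') as ->.
  destruct (Hd 0) as [u Hu]. pose proof (vderiv3_unique _ _ _ _ Hu HX) as ->.
  pose proof (vderiv3_dot _ _ _ _ _ HV0' HX) as Hdd.
  assert (Hz : derivable_pt_lim (fun s => dot3 (V s) (gam s)) 0 0).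
  { eapply dlim_ext. intro s; apply Hperp. apply derivable_pt_lim_const. }
  pose proof (uniqueness_limite _ _ _ _ Hdd Hz) as E.
  rewrite Hg0, HV0 in *. unfold tang in Ht.
  assert (E' : dot3 V0' p = - dot3 e X) by lra.
  rewrite E' in Ht. f_equal.
  destruct V0' as [[a1 a2] a3], p as [[p1 p2] p3]; simpl in *.
  injection Ht; intros. f_equal; [f_equal|]; lra.
Qed.

Definition dcol3 (x w : R4) : R3 :=
  let '(x1,x2,x3,x4) := x in let '(w1,w2,w3,w4) := w in
  (2*(x1*w3 + w1*x3 + x2*w4 + w2*x4), 2*(x2*w3 + w2*x3 - x1*w4 - w1*x4),
   2*(x1*w1 + x2*w2 - x3*w3 - x4*w4)).
Definition dcol1 (x w : R4) : R3 :=
  let '(x1,x2,x3,x4) := x in let '(w1,w2,w3,w4) := w in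
  (2*(x1*w1 - x2*w2 - x3*w3 + x4*w4), 2*(x1*w2 + w1*x2 + x3*w4 + w3*x4),
   -(2*(x1*w3 + w1*x3 - x2*w4 - w2*x4))).
Definition Af (f : R4 -> R4) (x w1 w2 : R4) := dot4 w1 (f x) * dot4 w2 (f x).
Definition Ax (x w1 w2 : R4) := dot4 w1 x * dot4 w2 x.
Definition Yh (x w : R4) : R3 := add3 (scal3 ((dot4 x x)^2) (dcol1 x w)) (scal3 (dot3 (col1 x) (dcol3 x w)) (col3 x)).

Ltac d4 := repeat match goal with v : R4 |- _ => destruct v as [[[? ?] ?] ?] end.
Ltac d3 := repeat match goal with v : R3 |- _ => destruct v as [[? ?] ?] end.

Lemma I1 x w1 w2 : dot3 (dcol3 x w1) (dcol3 x w2) = 4*(Af Xf1 x w1 w2 + Af Xf2 x w1 w2 + Ax x w1 w2).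
Proof. d4; simpl; unfold Af, Ax; simpl; ring. Qed.
Lemma I2 x w1 w2 : dot3 (Yh x w1) (Yh x w2) = 4*(dot4 x x)^4*(Af Xf3 x w1 w2 + Ax x w1 w2).
Proof. d4; unfold Yh, Af, Ax; simpl; ring. Qed.
Lemma I3 x w1 w2 : Af Xf1 x w1 w2 + Af Xf2 x w1 w2 + Af Xf3 x w1 w2 + Ax x w1 w2 = dot4 x x * dot4 w1 w2.
Proof. d4; unfold Af, Ax; simpl; ring. Qed.
Lemma J1 x w : dot3 (dcol3 x w) (col3 x) = 2 * dot4 x x * dot4 w x.
Proof. d4; simpl; ring. Qed.
Lemma J2 x w : dot3 (dcol1 x w) (col3 x) + dot3 (dcol3 x w) (col1 x) = 0.
Proof. d4; simpl; ring. Qed.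
Lemma J3 x w : dot3 (dcol1 x w) (col1 x) = 2 * dot4 x x * dot4 w x.
Proof. d4; simpl; ring. Qed.
Lemma J4 x : dot3 (col1 x) (col3 x) = 0.
Proof. d4; simpl; ring. Qed.
Lemma J5 x : dot3 (col1 x) (col1 x) = (dot4 x x)^2.
Proof. d4; simpl; ring. Qed.
Lemma J6 x : dot3 (col3 x) (col3 x) = (dot4 x x)^2.
Proof. d4; simpl; ring. Qed.
Lemma L3 x w t : col3 (add4 x (scal4 t w)) = add3 (add3 (col3 x) (scal3 t (dcol3 x w))) (scal3 (t^2) (col3 w)).
Proof. d4; simpl; f_equal; [f_equal|]; ring. Qed.
Lemma L1 x w t : col1 (add4 x (scal4 t w)) = add3 (add3 (col1 x) (scal3 t (dcol1 x w))) (scal3 (t^2) (col1 w)).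
Proof. d4; simpl; f_equal; [f_equal|]; ring. Qed.

Lemma cg_ex c m r p e X1 X2 Y1 Y2 :
  dot3 X1 p = 0 -> dot3 Y1 p = 0 -> dot3 X2 p = 0 -> dot3 Y2 p = 0 ->
  0 < c -> dot3 p p = 1/c -> dot3 e p = 0 ->
  cg_metric c m r (p,e) (X1, add3 (scal3 (-(c*dot3 e X1)) p) Y1) (X2, add3 (scal3 (-(c*dot3 e X2)) p) Y2)
   (dot3 X1 X2 + Rpower (1 / (1 + dot3 e e)) m * (dot3 Y1 Y2 + r * dot3 Y1 e * dot3 Y2 e)).
Proof.
  intros. exists X1, Y1, X2, Y2, (X1, scal3 (-(c*dot3 e X1)) p), (X2, scal3 (-(c*dot3 e X2)) p).
  repeat split; auto; apply hlift_ex; auto.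
Qed.

Lemma add3_cancel z a b : add3 z a = add3 z b -> a = b.
Proof. destruct z as [[? ?] ?], a as [[? ?] ?], b as [[? ?] ?]; simpl; intros H; injection H; intros.
  f_equal; [f_equal|]; lra. Qed.

Lemma cg_uniq c m r p e X1 X2 Y1 Y2 v :
  cg_metric c m r (p,e) (X1, add3 (scal3 (-(c*dot3 e X1)) p) Y1) (X2, add3 (scal3 (-(c*dot3 e X2)) p) Y2) v ->
  v = dot3 X1 X2 + Rpower (1 / (1 + dot3 e e)) m * (dot3 Y1 Y2 + r * dot3 Y1 e * dot3 Y2 e).
Proof.
  intros (X1' & Y1' & X2' & Y2' & H1 & H2 & _ & _ & _ & _ & HH1 & HH2 & E1 & E2 & ->).
  apply hlift_unique in HH1, HH2. subst H1 H2. simpl in E1, E2.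
  injection E1; intros E1a ->. injection E2; intros E2a ->.
  apply add3_cancel in E1a, E2a. subst. reflexivity.
Qed.

Lemma quad3 (f : R -> R3) A Bv Dv : (forall t, f t = add3 (add3 A (scal3 t Bv)) (scal3 (t^2) Dv)) ->
  vderiv3 f 0 Bv.
Proof.
  intros H. destruct A as [[a1 a2] a3], Bv as [[b1 b2] b3], Dv as [[d1 d2] d3].
  unfold vderiv3; simpl; split; [|split].
  apply (quad_deriv _ a1 b1 d1); intro t; rewrite H; simpl; ring.
  apply (quad_deriv _ a2 b2 d2); intro t; rewrite H; simpl; ring.
  apply (quad_deriv _ a3 b3 d3); intro t; rewrite H; simpl; ring.
Qed.

Lemma scal3_line a A Bv Dv t : scal3 a (add3 (add3 A (scal3 t Bv)) (scal3 (t^2) Dv)) =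
  add3 (add3 (scal3 a A) (scal3 t (scal3 a Bv))) (scal3 (t^2) (scal3 a Dv)).
Proof. d3; simpl; f_equal; [f_equal|]; ring. Qed.

Lemma scal4_line k y w t : scal4 k (add4 y (scal4 t w)) = add4 (scal4 k y) (scal4 t (scal4 k w)).
Proof. d4; simpl; repeat apply (f_equal2 pair); ring. Qed.

Lemma dot4_scal k u v : dot4 (scal4 k u) (scal4 k v) = k^2 * dot4 u v.
Proof. d4; simpl; ring. Qed.

Lemma Af_scal f k y w1 w2 : (forall z, f (scal4 k z) = scal4 k (f z)) ->
  Af f (scal4 k y) (scal4 k w1) (scal4 k w2) = k^4 * Af f y w1 w2.
Proof. intros H; unfold Af; rewrite H, !dot4_scal; ring. Qed.

Lemma Xf1_s k z : Xf1 (scal4 k z) = scal4 k (Xf1 z). Proof. d4; simpl; repeat apply (f_equal2 pair); ring. Qed.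
Lemma Xf2_s k z : Xf2 (scal4 k z) = scal4 k (Xf2 z). Proof. d4; simpl; repeat apply (f_equal2 pair); ring. Qed.
Lemma Xf3_s k z : Xf3 (scal4 k z) = scal4 k (Xf3 z). Proof. d4; simpl; repeat apply (f_equal2 pair); ring. Qed.

Lemma onS3_norm c y : 0 < c -> on_S3 (c/4) y -> dot4 y y = 4/c.
Proof.
  intros Hc H. unfold on_S3, norm4 in H.
  assert (Hy : 0 <= dot4 y y) by (d4; simpl; nra).
  assert (Hc4 : 0 < c/4) by lra.
  pose proof (sqrt_sqrt _ Hy) as E. rewrite H in E.
  rewrite <- E. pose proof (sqrt_sqrt _ (Rlt_le _ _ Hc4)).
  pose proof (sqrt_lt_R0 _ Hc4).
  replace (4/c) with (1/(sqrt (c/4) * sqrt (c/4))). field. lra.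
  rewrite H0. field. lra.
Qed.

Definition xx (c : R) (y : R4) := scal4 (sqrt c / 2) y.
Definition pp (c : R) (y : R4) := scal3 (1 / sqrt c) (col3 (xx c y)).
Definition ee (c : R) (y : R4) := col1 (xx c y).
Definition Xv (c : R) (y w : R4) := scal3 (1 / sqrt c) (dcol3 (xx c y) (scal4 (sqrt c / 2) w)).
Definition Yv (c : R) (y w : R4) :=
  add3 (dcol1 (xx c y) (scal4 (sqrt c / 2) w)) (scal3 (c * dot3 (ee c y) (Xv c y w)) (pp c y)).
Definition xi (c : R) (y w : R4) :=
  (Xv c y w, add3 (scal3 (-(c*dot3 (ee c y) (Xv c y w))) (pp c y)) (Yv c y w)).

Lemma Fmap_pe c y : Fmap c y = (pp c y, ee c y).
Proof. reflexivity. Qed.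

Lemma dF c y w : is_dF c y w (xi c y w).
Proof.
  split.
  - apply (quad3 _ (pp c y) (Xv c y w) (scal3 (1/sqrt c) (col3 (scal4 (sqrt c / 2) w)))).
    intro t. unfold Fmap, pp, Xv, xx; simpl fst. rewrite scal4_line, L3, scal3_line. reflexivity.
  - simpl snd. replace (add3 (scal3 (- (c * dot3 (ee c y) (Xv c y w))) (pp c y)) (Yv c y w))
      with (dcol1 (xx c y) (scal4 (sqrt c / 2) w)).
    apply (quad3 _ (ee c y) _ (col1 (scal4 (sqrt c / 2) w))).
    intro t. unfold Fmap, ee, xx; simpl snd. rewrite scal4_line, L1. reflexivity.
    unfold Yv. generalize (dcol1 (xx c y) (scal4 (sqrt c / 2) w)) (pp c y). intros u v. d3; simpl.
    repeat apply (f_equal2 pair); ring.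
Qed.


Lemma sq_c (c : R) (Hc : 0 < c) : sqrt c * sqrt c = c. Proof. apply sqrt_sqrt; lra. Qed.
Lemma s_pos (c : R) (Hc : 0 < c) : 0 < sqrt c. Proof. apply sqrt_lt_R0; lra. Qed.

Lemma HN (c : R) (y : R4) (Hc : 0 < c) (Hy : on_S3 (c/4) y) : dot4 (xx c y) (xx c y) = 1.
Proof. unfold xx. rewrite dot4_scal, (onS3_norm c y Hc Hy). pose proof (sq_c c Hc); pose proof (s_pos c Hc).
  replace ((sqrt c / 2)^2) with (sqrt c * sqrt c / 4) by field. rewrite H. field; lra. Qed.

Lemma Hwx (c : R) (y : R4) (Hc : 0 < c) (Hy : on_S3 (c/4) y) w : dot4 w y = 0 -> dot4 (scal4 (sqrt c / 2) w) (xx c y) = 0.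
Proof. intros H; unfold xx; rewrite dot4_scal, H; ring. Qed.

Lemma pp_pp (c : R) (y : R4) (Hc : 0 < c) (Hy : on_S3 (c/4) y) : dot3 (pp c y) (pp c y) = 1/c.
Proof. unfold pp. rewrite dot3_scal_l, dot3_scal_r, J6, (HN c y Hc Hy). pose proof (sq_c c Hc); pose proof (s_pos c Hc).
  replace (1/c) with (1/(sqrt c * sqrt c)) by (rewrite H; reflexivity). field. lra. Qed.

Lemma ee_pp (c : R) (y : R4) (Hc : 0 < c) (Hy : on_S3 (c/4) y) : dot3 (ee c y) (pp c y) = 0.
Proof. unfold pp, ee. rewrite dot3_scal_r, J4. ring. Qed.

Lemma ee_ee (c : R) (y : R4) (Hc : 0 < c) (Hy : on_S3 (c/4) y) : dot3 (ee c y) (ee c y) = 1.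
Proof. unfold ee. rewrite J5, (HN c y Hc Hy). ring. Qed.

Lemma Xv_pp (c : R) (y : R4) (Hc : 0 < c) (Hy : on_S3 (c/4) y) w : dot4 w y = 0 -> dot3 (Xv c y w) (pp c y) = 0.
Proof. intros H. unfold Xv, pp. rewrite dot3_scal_l, dot3_scal_r, J1, Hwx by auto. ring. Qed.

Lemma Yv_eq (c : R) (y : R4) (Hc : 0 < c) (Hy : on_S3 (c/4) y) w : Yv c y w = Yh (xx c y) (scal4 (sqrt c / 2) w).
Proof.
  unfold Yv, Yh, Xv, pp, ee. rewrite (HN c y Hc Hy), dot3_scal_r.
  generalize (dcol1 (xx c y) (scal4 (sqrt c / 2) w)) (col3 (xx c y))
    (dot3 (col1 (xx c y)) (dcol3 (xx c y) (scal4 (sqrt c / 2) w))).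
  intros u v d. pose proof (sq_c c Hc); pose proof (s_pos c Hc). d3; simpl.
  repeat apply (f_equal2 pair); rewrite <- H at 1; field; lra.
Qed.

Lemma Yv_pp (c : R) (y : R4) (Hc : 0 < c) (Hy : on_S3 (c/4) y) w : dot4 w y = 0 -> dot3 (Yv c y w) (pp c y) = 0.
Proof.
  intros H. rewrite (Yv_eq c y Hc Hy). unfold Yh, pp. rewrite (HN c y Hc Hy). dexp.
  pose proof (J2 (xx c y) (scal4 (sqrt c / 2) w)). rewrite J6, (HN c y Hc Hy).
  rewrite (dot3_comm (col1 _)). 
  replace (1 ^ 2 * (1 / sqrt c * dot3 (dcol1 (xx c y) (scal4 (sqrt c / 2) w)) (col3 (xx c y))) +
   dot3 (dcol3 (xx c y) (scal4 (sqrt c / 2) w)) (col1 (xx c y)) * (1 / sqrt c * 1 ^ 2))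
  with (1/sqrt c * (dot3 (dcol1 (xx c y) (scal4 (sqrt c / 2) w)) (col3 (xx c y)) +
    dot3 (dcol3 (xx c y) (scal4 (sqrt c / 2) w)) (col1 (xx c y)))) by ring.
  rewrite H0; ring.
Qed.

Lemma Yv_ee (c : R) (y : R4) (Hc : 0 < c) (Hy : on_S3 (c/4) y) w : dot4 w y = 0 -> dot3 (Yv c y w) (ee c y) = 0.
Proof.
  intros H. rewrite (Yv_eq c y Hc Hy). unfold Yh, ee. rewrite (HN c y Hc Hy). dexp.
  rewrite J3, (Hwx c y) by auto. rewrite (dot3_comm (col3 _) (col1 _)), J4. ring.
Qed.



Definition Vc (c m : R) (y w1 w2 : R4) :=
  c/4*(Af Xf1 y w1 w2 + Af Xf2 y w1 w2) + Rpower (1/(1+1)) m * (c^2/4) * Af Xf3 y w1 w2.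

Lemma core c m r y w1 w2 : 0 < c -> on_S3 (c/4) y -> dot4 w1 y = 0 -> dot4 w2 y = 0 ->
  exists xi1 xi2, is_dF c y w1 xi1 /\ is_dF c y w2 xi2 /\
    cg_metric c m r (Fmap c y) xi1 xi2 (Vc c m y w1 w2) /\
    (forall v, cg_metric c m r (Fmap c y) xi1 xi2 v -> v = Vc c m y w1 w2).
Proof.
  intros Hc Hy H1 H2.
  assert (Hval : dot3 (Xv c y w1) (Xv c y w2) + Rpower (1 / (1 + dot3 (ee c y) (ee c y))) m *
     (dot3 (Yv c y w1) (Yv c y w2) + r * dot3 (Yv c y w1) (ee c y) * dot3 (Yv c y w2) (ee c y))
     = Vc c m y w1 w2).
  { rewrite ee_ee, Yv_ee, Yv_ee by auto.
    rewrite !Yv_eq by auto. rewrite I2, HN by auto.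
    unfold Xv. rewrite dot3_scal_l, dot3_scal_r, I1.
    assert (Ha : Ax (xx c y) (scal4 (sqrt c / 2) w1) (scal4 (sqrt c / 2) w2) = 0).
    { unfold Ax. rewrite Hwx by auto. ring. }
    rewrite Ha. unfold xx. rewrite !Af_scal by (intro; first [apply Xf1_s|apply Xf2_s|apply Xf3_s]).
    unfold Vc. pose proof (sq_c c Hc). pose proof (s_pos c Hc).
    replace ((sqrt c / 2)^4) with ((sqrt c * sqrt c)^2/16) by (simpl; field).
    rewrite H. replace (1/sqrt c * (1/sqrt c * (4 * ((c^2/16) * Af Xf1 y w1 w2 + (c^2/16) * Af Xf2 y w1 w2 + 0))))
      with (1/(sqrt c * sqrt c) * (4 * ((c^2/16) * Af Xf1 y w1 w2 + (c^2/16) * Af Xf2 y w1 w2 + 0))) by (field; lra).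
    rewrite H. field. lra. }
  exists (xi c y w1), (xi c y w2). split; [apply dF|split; [apply dF|]].
  rewrite Fmap_pe. unfold xi. rewrite <- Hval. split.
  - apply cg_ex; auto using Xv_pp, Yv_pp, pp_pp, ee_pp.
  - intros v Hv. apply cg_uniq in Hv. exact Hv.
Qed.

Definition W2 (x : R4) : R3 := let '(x1,x2,x3,x4) := x in
  (2*x3*x4-2*x1*x2, x1^2-x2^2+x3^2-x4^2, 2*(x1*x4+x2*x3)).
Definition cross (a b : R3) : R3 := let '(a1,a2,a3) := a in let '(b1,b2,b3) := b in
  (a2*b3-a3*b2, a3*b1-a1*b3, a1*b2-a2*b1).

Lemma K1 x : cross (col3 x) (col1 x) = scal3 (dot4 x x) (W2 x).
Proof. d4; simpl; repeat apply (f_equal2 pair); ring. Qed.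

Lemma K2 x v : scal3 ((dot4 x x)^2) v = add3 (add3 (scal3 (dot3 v (col1 x)) (col1 x))
   (scal3 (dot3 v (W2 x)) (W2 x))) (scal3 (dot3 v (col3 x)) (col3 x)).
Proof. d4; d3; simpl; repeat apply (f_equal2 pair); ring. Qed.

Lemma K3 x v : dot3 v v * (dot4 x x)^2 = (dot3 v (col1 x))^2 + (dot3 v (W2 x))^2 + (dot3 v (col3 x))^2.
Proof. d4; d3; simpl; ring. Qed.

Definition rot (C S : R) (x : R4) := add4 (scal4 C x) (scal4 S (Xf3 x)).

Lemma K4 C S x : col3 (rot C S x) = scal3 (C^2+S^2) (col3 x).
Proof. d4; simpl; repeat apply (f_equal2 pair); ring. Qed.
Lemma K5 C S x : col1 (rot C S x) = add3 (scal3 (C^2-S^2) (col1 x)) (scal3 (2*C*S) (W2 x)).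
Proof. d4; simpl; repeat apply (f_equal2 pair); ring. Qed.
Lemma K6 C S x : dot4 (rot C S x) (rot C S x) = (C^2+S^2) * dot4 x x.
Proof. d4; simpl; ring. Qed.

Lemma hopf u : dot3 u u = 1 -> exists x0, dot4 x0 x0 = 1 /\ col3 x0 = u.
Proof.
  destruct u as [[u1 u2] u3]; simpl; intros Hu.
  destruct (Rlt_or_le (-1) u3) as [Hl | Hl].
  - set (a := sqrt ((1+u3)/2)).
    assert (Ha : a * a = (1+u3)/2) by (apply sqrt_sqrt; lra).
    assert (Hap : 0 < a) by (apply sqrt_lt_R0; lra).
    exists (a, 0, u1/(2*a), -u2/(2*a)). simpl. split.
    + transitivity (a*a + (u1*u1+u2*u2)/(4*(a*a))). field; lra.
      replace (u1*u1+u2*u2) with (1 - u3*u3) by lra. rewrite Ha. field. lra.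
    + repeat apply (f_equal2 pair).
      * field; lra.
      * field; lra.
      * transitivity (a*a - (u1*u1+u2*u2)/(4*(a*a))). field; lra.
        replace (u1*u1+u2*u2) with (1 - u3*u3) by lra. rewrite Ha. field. lra.
  - assert (u3 = -1) by nra. subst. assert (u1 = 0) by nra. assert (u2 = 0) by nra. subst.
    exists (0,0,1,0). simpl. split. ring. repeat apply (f_equal2 pair); ring.
Qed.

Lemma halfangle al be : al^2 + be^2 = 1 ->
  exists C S, C^2 + S^2 = 1 /\ C^2 - S^2 = al /\ 2*C*S = be.
Proof.
  intros H. destruct (Rlt_or_le 0 (1+al)) as [Hl|Hl].
  - set (C := sqrt ((1+al)/2)).
    assert (HC : C * C = (1+al)/2) by (apply sqrt_sqrt; lra).
    assert (HCp : 0 < C) by (apply sqrt_lt_R0; lra).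
    exists C, (be/(2*C)).
    replace ((be/(2*C))^2) with (be*be/(4*(C*C))) by (field; lra).
    replace (be*be) with (1 - al*al) by (simpl in H; lra). replace (C^2) with (C*C) by ring. rewrite HC.
    repeat split; field; try lra.
  - assert (al = -1) by nra. assert (be = 0) by nra. subst. exists 0, 1. repeat split; ring.
Qed.

Lemma dot3_nonneg u : 0 <= dot3 u u.
Proof. d3; simpl; nra. Qed.
Lemma dot4_nonneg u : 0 <= dot4 u u.
Proof. d4; simpl; nra. Qed.

Lemma norm3_sq p a : norm3 p = a -> dot3 p p = a * a.
Proof. unfold norm3; intros <-. symmetry; apply sqrt_sqrt, dot3_nonneg. Qed.

Lemma scal4_scal4 a b x : scal4 a (scal4 b x) = scal4 (a*b) x.
Proof. d4; simpl; repeat apply (f_equal2 pair); ring. Qed.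
Lemma scal4_1 x : scal4 1 x = x.
Proof. d4; simpl; repeat apply (f_equal2 pair); ring. Qed.
Lemma scal3_scal3 a b x : scal3 a (scal3 b x) = scal3 (a*b) x.
Proof. d3; simpl; repeat apply (f_equal2 pair); ring. Qed.
Lemma scal3_1 x : scal3 1 x = x.
Proof. d3; simpl; repeat apply (f_equal2 pair); ring. Qed.

Lemma surj c q : 0 < c -> in_T1S2 c q -> exists y, on_S3 (c/4) y /\ Fmap c y = q.
Proof.
  intros Hc. destruct q as [p v]. intros (Hp & Hv & Hpv).
  apply norm3_sq in Hp, Hv.
  pose proof (sqrt_sqrt c (Rlt_le _ _ Hc)) as Hs. pose proof (sqrt_lt_R0 c Hc) as Hsp.
  set (s := sqrt c) in *.
  assert (Hu : dot3 (scal3 s p) (scal3 s p) = 1).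
  { rewrite dot3_scal_l, dot3_scal_r, Hp. field. lra. }
  destruct (hopf _ Hu) as (x0 & HN0 & Hx0).
  set (al := dot3 v (col1 x0)). set (be := dot3 v (W2 x0)).
  assert (Hg : dot3 v (col3 x0) = 0).
  { rewrite Hx0, dot3_scal_r, dot3_comm, Hpv. ring. }
  assert (Hab : al^2 + be^2 = 1).
  { pose proof (K3 x0 v) as K. rewrite Hg, HN0, Hv in K. fold al be in K. nra. }
  destruct (halfangle _ _ Hab) as (C & S & H1 & H2 & H3).
  set (x := rot C S x0).
  exists (scal4 (2/s) x). split.
  - unfold on_S3, norm4. rewrite dot4_scal. unfold x. rewrite K6, H1, HN0.
    replace ((2/s)^2 * (1*1)) with (/(c/4)). rewrite sqrt_inv; unfold Rdiv; ring.
    replace ((2/s)^2) with (4/(s*s)) by (field; lra). rewrite Hs. field; lra.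
  - rewrite Fmap_pe; unfold pp, ee, xx; fold s. rewrite scal4_scal4. replace (s/2*(2/s)) with 1 by (field; lra).
    rewrite scal4_1. unfold x. rewrite K4, K5, H1, H2, H3, Hx0, scal3_1, scal3_scal3.
    replace (1/s*s) with 1 by (field; lra). rewrite scal3_1. f_equal.
    pose proof (K2 x0 v) as K. rewrite HN0, Hg in K. fold al be in K.
    replace (1^2) with 1 in K by ring. rewrite scal3_1 in K. rewrite K.
    destruct (col1 x0) as [[? ?] ?], (W2 x0) as [[? ?] ?], (col3 x0) as [[? ?] ?]; simpl.
    repeat apply (f_equal2 pair); ring.
Qed.

Lemma key x y : dot4 x x = 1 -> dot4 y y = 1 -> col1 x = col1 y -> col3 x = col3 y -> W2 x = W2 y ->
  y = x \/ y = opp4 x.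
Proof.
  destruct x as [[[x1 x2] x3] x4], y as [[[y1 y2] y3] y4]. simpl.
  intros N1 N2 E1 E3 E2. repeat match goal with H : (_,_) = (_,_) |- _ => apply pair_equal_spec in H; destruct H end.
  assert (m11 : y1*y1 = x1*x1) by lra. assert (m22 : y2*y2 = x2*x2) by lra.
  assert (m33 : y3*y3 = x3*x3) by lra. assert (m44 : y4*y4 = x4*x4) by lra.
  assert (m12 : y1*y2 = x1*x2) by lra. assert (m34 : y3*y4 = x3*x4) by lra.
  assert (m13 : y1*y3 = x1*x3) by lra. assert (m24 : y2*y4 = x2*x4) by lra.
  assert (m14 : y1*y4 = x1*x4) by lra. assert (m23 : y2*y3 = x2*x3) by lra.
  set (d := x1*y1+x2*y2+x3*y3+x4*y4).
  assert (Ed : d*d = 1).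
  { transitivity ((x1*x1)*(y1*y1) + (x2*x2)*(y2*y2) + (x3*x3)*(y3*y3) + (x4*x4)*(y4*y4)
      + 2*((x1*x2)*(y1*y2) + (x1*x3)*(y1*y3) + (x1*x4)*(y1*y4) + (x2*x3)*(y2*y3)
      + (x2*x4)*(y2*y4) + (x3*x4)*(y3*y4))). unfold d; ring.
    rewrite m11, m22, m33, m44, m12, m13, m14, m23, m24, m34.
    transitivity ((x1*x1+x2*x2+x3*x3+x4*x4)^2). ring. rewrite N1. ring. }
  assert (Hd : (d - 1) * (d + 1) = 0) by lra.
  apply Rmult_integral in Hd. destruct Hd as [Hd|Hd].
  - left. assert (Z : (y1-x1)^2 + (y2-x2)^2 + (y3-x3)^2 + (y4-x4)^2 = 0) by (unfold d in Hd; nra).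
    pose proof (pow2_ge_0 (y1-x1)); pose proof (pow2_ge_0 (y2-x2)); pose proof (pow2_ge_0 (y3-x3)); pose proof (pow2_ge_0 (y4-x4)).
    assert (y1 - x1 = 0) by (apply Rsqr_0_uniq; unfold Rsqr; nra).
    assert (y2 - x2 = 0) by (apply Rsqr_0_uniq; unfold Rsqr; nra).
    assert (y3 - x3 = 0) by (apply Rsqr_0_uniq; unfold Rsqr; nra).
    assert (y4 - x4 = 0) by (apply Rsqr_0_uniq; unfold Rsqr; nra).
    repeat apply (f_equal2 pair); lra.
  - right. assert (Z : (y1+x1)^2 + (y2+x2)^2 + (y3+x3)^2 + (y4+x4)^2 = 0) by (unfold d in Hd; nra).
    pose proof (pow2_ge_0 (y1+x1)); pose proof (pow2_ge_0 (y2+x2)); pose proof (pow2_ge_0 (y3+x3)); pose proof (pow2_ge_0 (y4+x4)).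
    assert (y1 + x1 = 0) by (apply Rsqr_0_uniq; unfold Rsqr; nra).
    assert (y2 + x2 = 0) by (apply Rsqr_0_uniq; unfold Rsqr; nra).
    assert (y3 + x3 = 0) by (apply Rsqr_0_uniq; unfold Rsqr; nra).
    assert (y4 + x4 = 0) by (apply Rsqr_0_uniq; unfold Rsqr; nra).
    unfold opp4; simpl. repeat apply (f_equal2 pair); lra.
Qed.

Lemma inj c y y' : 0 < c -> on_S3 (c/4) y -> on_S3 (c/4) y' -> Fmap c y = Fmap c y' ->
  y' = y \/ y' = opp4 y.
Proof.
  intros Hc Hy Hy' E. rewrite !Fmap_pe in E. apply pair_equal_spec in E as [Ep Ee].
  pose proof (HN c y Hc Hy) as N1. pose proof (HN c y' Hc Hy') as N2.
  pose proof (sqrt_lt_R0 c Hc) as Hs.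
  assert (E3 : col3 (xx c y) = col3 (xx c y')).
  { unfold pp in Ep. apply (f_equal (scal3 (sqrt c))) in Ep. rewrite !scal3_scal3 in Ep.
    replace (sqrt c * (1/sqrt c)) with 1 in Ep by (field; lra). rewrite !scal3_1 in Ep. exact Ep. }
  unfold ee in Ee.
  assert (E2 : W2 (xx c y) = W2 (xx c y')).
  { pose proof (K1 (xx c y)) as K. pose proof (K1 (xx c y')) as K'.
    rewrite N1, scal3_1 in K. rewrite N2, scal3_1 in K'. rewrite <- K, <- K', E3, Ee. reflexivity. }
  destruct (key _ _ N1 N2 Ee E3 E2) as [H|H]; unfold xx in H.
  - left. apply (f_equal (scal4 (2/sqrt c))) in H. rewrite !scal4_scal4 in H.
    replace (2/sqrt c * (sqrt c/2)) with 1 in H by (field; lra). rewrite !scal4_1 in H. exact H.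
  - right. apply (f_equal (scal4 (2/sqrt c))) in H. unfold opp4 in H. rewrite !scal4_scal4 in H.
    replace (2/sqrt c * (sqrt c/2)) with 1 in H by (field; lra). rewrite scal4_1 in H.
    rewrite H. unfold opp4. f_equal. field. lra.
Qed.

Lemma inT1 c y : 0 < c -> on_S3 (c/4) y -> in_T1S2 c (Fmap c y).
Proof.
  intros Hc Hy. rewrite Fmap_pe. simpl. unfold norm3.
  rewrite pp_pp, ee_ee, dot3_comm, ee_pp by auto. rewrite sqrt_1. repeat split; auto.
  unfold Rdiv; rewrite !Rmult_1_l; apply sqrt_inv.
Qed.

Lemma Fopp c y : Fmap c (opp4 y) = Fmap c y.
Proof. unfold Fmap, opp4. d4; simpl; repeat apply (f_equal2 pair); ring. Qed.

Lemma ln2_pos : 0 < ln 2.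
Proof. rewrite <- ln_1. apply ln_increasing; lra. Qed.

Lemma Rpow_half m : Rpower (1/(1+1)) m = exp (- (m * ln 2)).
Proof. unfold Rpower. f_equal. replace (1/(1+1)) with (/2) by field. rewrite ln_Rinv by lra. ring. Qed.

Lemma rho1 c : 0 < c -> Rpower (1/(1+1)) (log2 c) = 1/c.
Proof.
  intros Hc. rewrite Rpow_half. unfold log2. pose proof ln2_pos.
  replace (ln c / ln 2 * ln 2) with (ln c) by (field; lra).
  rewrite exp_Ropp, exp_ln by auto. field. lra.
Qed.

Lemma rho2 eps : 0 < eps -> Rpower (1/(1+1)) (log2 (eps^2) + 2) = 1/(4*eps^2).
Proof.
  intros He. rewrite Rpow_half. unfold log2. pose proof ln2_pos.
  replace ((ln (eps^2) / ln 2 + 2) * ln 2) with (ln (eps^2) + ln 2 + ln 2) by (field; lra).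
  rewrite <- !ln_mult by (try apply pow_lt; lra || nra).
  rewrite exp_Ropp, exp_ln by (apply Rmult_lt_0_compat; [apply Rmult_lt_0_compat; [apply pow_lt|]|]; lra).
  field. lra.
Qed.

Theorem theorem1 :
  (forall c : R, 0 < c ->
     (forall y, on_S3 (c / 4) y -> in_T1S2 c (Fmap c y)) /\
     (forall q, in_T1S2 c q -> exists y, on_S3 (c / 4) y /\ Fmap c y = q) /\
     (forall y, on_S3 (c / 4) y -> Fmap c (opp4 y) = Fmap c y) /\
     (forall y y', on_S3 (c / 4) y -> on_S3 (c / 4) y' ->
        Fmap c y = Fmap c y' -> y' = y \/ y' = opp4 y) /\
     (forall r, 0 <= r -> pullback_is c (log2 c) r round_metric)) /\
  (forall eps r : R, 0 < eps -> 0 <= r ->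
     pullback_is 4 (log2 (eps ^ 2) + 2) r (berger eps)).
Proof.
  split.
  - intros c Hc. split; [|split; [|split; [|split]]].
    + intros; apply inT1; auto.
    + intros; apply surj; auto.
    + intros; apply Fopp.
    + intros; eapply inj; eauto.
    + intros r Hr y w1 w2 Hy H1 H2.
      replace (round_metric y w1 w2) with (Vc c (log2 c) y w1 w2).
      apply core; auto.
      unfold Vc, round_metric. rewrite rho1 by auto.
      pose proof (I3 y w1 w2) as I. rewrite (onS3_norm c y Hc Hy) in I.
      unfold Ax in I. rewrite H1, H2 in I. 
      replace (dot4 w1 w2) with (c/4 * (4/c * dot4 w1 w2)) by (field; lra).
      rewrite <- I. field. lra.
  - intros eps r He Hr y w1 w2 Hy H1 H2.
    replace (berger eps y w1 w2) with (Vc 4 (log2 (eps^2) + 2) y w1 w2).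
    apply core; auto; lra.
    unfold Vc, berger, Af. rewrite rho2 by auto. field. lra.
Qed.
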